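(* Let $\kappa$ be a regular cardinal and $\mathbf m=(\mathfrak B,D)\in K^{\mathrm{ba}}_\kappa$. Then every $T_{\mathrm{ord}}$-$(\aleph_0,\aleph_0)$-moral problem in $\mathbf m$ has a solution in $\mathbf m$.
   Context: $K^{\mathrm{ba}}_\kappa$ is the class of pairs $(\mathfrak B,D)$ with $\mathfrak B$ a complete Boolean algebra satisfying the $\kappa$-chain condition and $D$ a filter on $\mathfrak B$. Let $I=I_1+I_2$ with $I_1=\{1\}\times\omega$ ordered as $\omega$ and $I_2=\{2\}\times\omega$ ordered reversely, $I_1$ before $I_2$. A $T_{\mathrm{ord}}$-$(\aleph_0,\aleph_0)$-moral problem in $\mathbf m$ is $\langle\mathbf a_{s,t}:s<_It\rangle$, $\mathbf a_{s,t}\in D$, such that for every finite $u\subseteq I$ and $\mathbf t:\{(s,t)\in u^2:s<_It\}\to\{0,1\}$ with $\bigcap\mathbf a_{s,t}^{\mathbf t(s,t)}>0$ ($\mathbf a^1=\mathbf a$, $\mathbf a^0=1-\mathbf a$) there is $f:u\to\{0,\dots,|u|-1\}$ with $\mathbf t(s,t)=1\iff f(s)\le f(t)$. A solution is $\langle\mathbf b_s:s\in I\rangle$ with $\mathbf b_s\in D$ and $\mathbf b_{s_1}\cap\mathbf b_{s_2}\le\mathbf a_{s_1,s_2}$ for all $s_1\in I_1,s_2\in I_2$. *)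

(* Defs.v *)
From HB Require Import structures.
From mathcomp Require Import all_boot all_order.
Set Implicit Arguments. Unset Strict Implicit. Unset Printing Implicit Defensive.
Import Order.TTheory.
Local Open Scope order_scope.

Definition card_le (A B : Type) : Prop := exists f : A -> B, injective f.
Definition card_lt (A B : Type) : Prop := card_le A B /\ ~ card_le B A.

Definition regular_cardinal (K : Type) : Prop :=
  card_le nat K /\
  forall (J : Type) (S : J -> K -> Prop),
    card_lt J K -> (forall j, card_lt {x : K | S j x} K) ->
    ~ (forall x : K, exists j, S j x).

(* A Boolean algebra is a complemented distributive lattice with top and bottom
   (mathcomp's ctbDistrLatticeType); meet `&`, join `|`, complement ~`. *)

Definition complete_ba {d} (B : ctbDistrLatticeType d) : Prop :=
  forall P : B -> Prop, exists x : B,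
    (forall y, P y -> y <= x) /\ (forall z, (forall y, P y -> y <= z) -> x <= z).

Definition antichain {d} (B : ctbDistrLatticeType d) (A : B -> Prop) : Prop :=
  (forall x, A x -> x != \bot) /\
  (forall x y, A x -> A y -> x <> y -> x `&` y = \bot).

Definition chain_condition (K : Type) {d} (B : ctbDistrLatticeType d) : Prop :=
  forall A : B -> Prop, antichain A -> card_lt {x : B | A x} K.

Definition is_filter {d} (B : ctbDistrLatticeType d) (D : B -> Prop) : Prop :=
  D \top /\
  (forall x y, D x -> x <= y -> D y) /\
  (forall x y, D x -> D y -> D (x `&` y)).

(* inl n = (1,n) in I_1 (ordered as omega), inr n = (2,n) in I_2 (reverse order),
   I_1 before I_2. *)
Definition Iidx := (nat + nat)%type.

Definition ltI (s t : Iidx) : bool :=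
  match s, t with
  | inl m, inl n => (m < n)%N
  | inr m, inr n => (n < m)%N
  | inl _, inr _ => true
  | inr _, inl _ => false
  end.

(* a^1 = a, a^0 = 1 - a *)
Definition bpow {d} {B : ctbDistrLatticeType d} (a : B) (e : bool) : B :=
  if e then a else ~` a.

(* T_ord-(aleph_0,aleph_0)-moral problem in (B,D): a_{s,t} (used for s <_I t) *)
Definition moral_problem {d} (B : ctbDistrLatticeType d) (D : B -> Prop)
  (a : Iidx -> Iidx -> B) : Prop :=
  (forall s t, ltI s t -> D (a s t)) /\
  forall (u : seq Iidx) (tt : Iidx -> Iidx -> bool), uniq u ->
    \bot < \meet_(s <- u) \meet_(t <- u | ltI s t) bpow (a s t) (tt s t) ->
    exists f : Iidx -> nat,
      (forall s, s \in u -> (f s < size u)%N) /\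
      (forall s t, s \in u -> t \in u -> ltI s t ->
         (tt s t = true <-> (f s <= f t)%N)).

Definition moral_solution {d} (B : ctbDistrLatticeType d) (D : B -> Prop)
  (a : Iidx -> Iidx -> B) (b : Iidx -> B) : Prop :=
  (forall s, D (b s)) /\
  (forall m n : nat, b (inl m) `&` b (inr n) <= a (inl m) (inr n)).

(* Main.v *)
Require Import Defs.
From mathcomp Require Import all_boot all_order.
From mathcomp Require Import zify.
Import Order.TTheory.
Local Open Scope order_scope.

Section Aux.
Variables (d : Order.disp_t) (B : ctbDistrLatticeType d) (D : B -> Prop).
Variable a : Iidx -> Iidx -> B.

Definition cN (N : nat) : B :=
  \meet_(i <- iota 0 N.+1) \meet_(j <- iota 0 N.+1) a (inl i) (inr j).

Lemma cN_le N m n : (m <= N)%N -> (n <= N)%N -> cN N <= a (inl m) (inr n).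
Proof.
move=> hm hn; rewrite /cN.
move/meetsP_seq: (le_refl (cN N)) => /(_ m) H.
have := H; rewrite /cN => H'.
apply: le_trans (H' _ _) _; first by rewrite mem_iota /=; lia.
  by [].
move/meetsP_seq: (le_refl (\meet_(j <- iota 0 N.+1) a (inl m) (inr j))) => /(_ n).
by apply; rewrite // mem_iota; lia.
Qed.

End Aux.

Theorem mainTheorem9 (K : Type) (d : Order.disp_t) (B : ctbDistrLatticeType d)
  (D : B -> Prop) :
  regular_cardinal K -> complete_ba B -> chain_condition K B -> is_filter D ->
  forall a : Iidx -> Iidx -> B, moral_problem D a ->
  exists b : Iidx -> B, moral_solution D a b.
Proof.
move=> _ _ _ [Dt [Dup DI]] a [Da _].
pose b (s : Iidx) := match s with inl m => @cN _ B a m | inr n => @cN _ B a n end.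
exists b; split.
  move=> s; have H : forall N, D (@cN _ B a N).
    move=> N; rewrite /cN.
    apply: (big_ind D) => // i _; apply: (big_ind D) => // j _.
    exact: Da.
  by case: s => n; apply: H.
move=> m n /=.
case: (leqP m n) => h.
  by apply: leIxr; apply: cN_le.
by apply: leIxl; apply: cN_le => //; apply: ltnW.
Qed.
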